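(* Let $(\mathcal{X},W(y|x),\mathcal{Y})$ be a discrete channel, $P$ a pmf on $\mathcal{X}$, $L\ge1$, and $M\ge L+1$ integers. Let $F\colon[M]\to\mathcal{X}$ have i.i.d. values $F(m)\sim P$, and write $G=G(W)$. Then $$\Pr\{F\text{ is an }(M,L)\text{ zero-error list code for }W\}\le 1-\frac1B,$$ where $$B=\binom{M}{L+1}^{-1}2^{LI_{L+1}(G,P)}+1+\sum_{\ell=1}^L\binom{L+1}{\ell}^2\binom{M}{\ell}^{-1}2^{L\theta^{(\ell)}_{L+1}(G,P)}.$$
   Context: Notation: $[j]=\{1,\dots,j\}$, $[i:j]=\{i,\dots,j\}$; $\log$ base 2. A discrete channel has finite $\mathcal{X},\mathcal{Y}$ and pmfs $W(\cdot|x)$ on $\mathcal{Y}$. $G(W)=(\mathcal{X},\mathcal{E})$ is the hypergraph whose edges are all $e\subseteq\mathcal{X}$ with $\prod_{x\in e}W(y|x)=0$ for every $y\in\mathcal{Y}$. A map $f\colon[M]\to\mathcal{X}$ is an $(M,L)$ zero-error list code for $W$ if for every $(L+1)$-element subset $S\subseteq[M]$, $\{f(m):m\in S\}\in\mathcal{E}$. For $x_{[k]}\in\mathcal{X}^k$, $\sigma(x_{[k]})=\{x_1,\dots,x_k\}$, $P(x_S)=\prod_{j\in S}P(x_j)$. $I_{L+1}(G,P):=-\frac1L\log\sum_{x_{[L+1]}:\sigma(x_{[L+1]})\notin\mathcal{E}}P(x_{[L+1]})$ and for $\ell\in[L]$, $\theta^{(\ell)}_{L+1}(G,P):=2I_{L+1}(G,P)+\frac1L\log\sum_{x_{[\ell]}}P(x_{[\ell]})\Big[\sum_{x_{[\ell+1:L+1]}:\sigma(x_{[L+1]})\notin\mathcal{E}}P(x_{[\ell+1:L+1]})\Big]^2$.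 *)

(* Defs.v *)
From HB Require Import structures.
From mathcomp Require Import all_boot.
From Stdlib Require Import Reals.

Set Implicit Arguments.
Unset Strict Implicit.
Unset Printing Implicit Defensive.

Lemma Rplus_assoc' : associative Rplus.
Proof. by move=> a b c; rewrite Rplus_assoc. Qed.
Lemma Rmult_assoc' : associative Rmult.
Proof. by move=> a b c; rewrite Rmult_assoc. Qed.
HB.instance Definition _ := Monoid.isComLaw.Build R 0%R Rplus
  Rplus_assoc' Rplus_comm Rplus_0_l.
HB.instance Definition _ := Monoid.isComLaw.Build R 1%R Rmult
  Rmult_assoc' Rmult_comm Rmult_1_l.

Definition Rzerob (x : R) : bool := if Req_EM_T x 0%R then true else false.

Definition log2 (x : R) : R := (ln x / ln 2)%R.
Definition pow2 (x : R) : R := Rpower 2 x.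

Section Defs.
Variables (X Y : finType).

Definition is_channel (W : X -> Y -> R) : Prop :=
  (forall x y, (0 <= W x y)%R) /\ (forall x, \big[Rplus/0%R]_(y : Y) W x y = 1%R).

Definition is_pmf (P : X -> R) : Prop :=
  (forall x, (0 <= P x)%R) /\ \big[Rplus/0%R]_(x : X) P x = 1%R.

(* edges of the hypergraph G(W): subsets e with prod_{x in e} W(y|x) = 0 for all y *)
Definition is_edge (W : X -> Y -> R) (e : {set X}) : bool :=
  [forall y : Y, Rzerob (\big[Rmult/1%R]_(x in e) W x y)].

Definition is_list_code (W : X -> Y -> R) (M L : nat) (f : {ffun 'I_M -> X}) : bool :=
  [forall S : {set 'I_M}, (#|S| == L.+1) ==> is_edge W (f @: S)].
Arguments is_list_code W M L f : clear implicits.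

Definition sigma k (x : {ffun 'I_k -> X}) : {set X} := [set x i | i : 'I_k].

Definition Pprod (P : X -> R) k (x : {ffun 'I_k -> X}) : R :=
  \big[Rmult/1%R]_(i : 'I_k) P (x i).

Definition nonedge_mass (W : X -> Y -> R) (P : X -> R) (L : nat) : R :=
  \big[Rplus/0%R]_(x : {ffun 'I_L.+1 -> X} | ~~ is_edge W (sigma x)) Pprod P x.

Definition I_L1 (W : X -> Y -> R) (P : X -> R) (L : nat) : R :=
  (- (1 / INR L) * log2 (nonedge_mass W P L))%R.

(* sum_{x_[l]} P(x_[l]) [ sum_{x_[l+1:L+1] : sigma(x_[L+1]) not edge} P(x_[l+1:L+1]) ]^2 ;
   the tuple x_[L+1] is split into its first l coordinates (a) and the
   remaining L+1-l coordinates (b). *)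
Definition theta_mass (W : X -> Y -> R) (P : X -> R) (L l : nat) : R :=
  \big[Rplus/0%R]_(a : {ffun 'I_l -> X})
    (Pprod P a *
     (\big[Rplus/0%R]_(b : {ffun 'I_(L.+1 - l) -> X}
                        | ~~ is_edge W (sigma a :|: sigma b)) Pprod P b) ^ 2)%R.

Definition theta_L1 (W : X -> Y -> R) (P : X -> R) (L l : nat) : R :=
  (2 * I_L1 W P L + (1 / INR L) * log2 (theta_mass W P L l))%R.

Definition B_bound (W : X -> Y -> R) (P : X -> R) (M L : nat) : R :=
  (/ INR 'C(M, L.+1) * pow2 (INR L * I_L1 W P L) + 1 +
   \big[Rplus/0%R]_(1 <= l < L.+1)
      (INR 'C(L.+1, l) ^ 2 * / INR 'C(M, l) * pow2 (INR L * theta_L1 W P L l)))%R.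

Definition prob_list_code (W : X -> Y -> R) (P : X -> R) (M L : nat) : R :=
  \big[Rplus/0%R]_(f : {ffun 'I_M -> X} | is_list_code W M L f)
     \big[Rmult/1%R]_(m : 'I_M) P (f m).

End Defs.

(* Main.v *)
Require Import Defs.
From HB Require Import structures.
From mathcomp Require Import all_boot.
From Stdlib Require Import Reals Lra Psatz.
Set Implicit Arguments.
Unset Strict Implicit.
Unset Printing Implicit Defensive.

Lemma binom_id n k l : l <= k -> k <= n -> 'C(n, l) * 'C(n - l, k - l) = 'C(n, k) * 'C(k, l).
Proof.
move=> lk kn.
have ln : l <= n by apply: leq_trans kn.
have e1 := bin_fact ln.
have e2 : 'C(n - l, k - l) * ((k - l)`! * (n - k)`!) = (n - l)`!.
  have h : k - l <= n - l by apply: leq_sub2r.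
  by rewrite -(bin_fact h) subnBA // subnK.
have e3 := bin_fact kn.
have e4 := bin_fact lk.
have pos : 0 < l`! * (k - l)`! * (n - k)`! by rewrite !muln_gt0 !fact_gt0.
apply/eqP; rewrite -(eqn_pmul2r pos); apply/eqP.
transitivity ('C(n, l) * (l`! * ('C(n - l, k - l) * ((k - l)`! * (n - k)`!)))).
  by rewrite !mulnA; congr (_ * _); rewrite -!mulnA; congr (_ * _); rewrite mulnCA.
rewrite e2 e1; symmetry.
transitivity ('C(n, k) * (('C(k, l) * (l`! * (k - l)`!)) * (n - k)`!)).
  by rewrite !mulnA.
by rewrite e4 e3.
Qed.

Lemma count_bound M L (S : {set 'I_M}) l : #|S| = L.+1 -> l <= L.+1 -> L.+1 <= M ->
  #|[set T : {set 'I_M} | (#|T| == L.+1) && (#|S :&: T| == l)]| * 'C(M, l)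
  <= 'C(L.+1, l) * 'C(L.+1, l) * 'C(M, L.+1).
Proof.
move=> HS lL LM.
set D := [set T : {set 'I_M} | (#|T| == L.+1) && (#|S :&: T| == l)].
pose g (T : {set 'I_M}) := (S :&: T, T :\: S).
have ginj : {in D &, injective g}.
  move=> T1 T2 _ _ [e1 e2].
  by rewrite -(setID T1 S) -(setID T2 S) setIC e1 e2 setIC.
have sub : g @: D \subset setX [set A : {set 'I_M} | A \subset S & #|A| == l]
                              [set B : {set 'I_M} | B \subset ~: S & #|B| == L.+1 - l].
  apply/subsetP => p /imsetP [T]; rewrite inE => /andP [/eqP HT /eqP HI] ->.
  rewrite !inE /= subsetIl HI eqxx /=.
  apply/andP; split.
    by apply/subsetP => x; rewrite !inE => /andP [].
  by rewrite cardsD HT setIC HI.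
have c1 : #|D| <= 'C(L.+1, l) * 'C(M - L.+1, L.+1 - l).
  rewrite -(card_in_imset ginj); apply: leq_trans (subset_leq_card sub) _.
  have hc : #|~: S| = M - L.+1 by rewrite cardsCs setCK card_ord HS.
  by rewrite cardsX !cards_draws hc HS.
have c2 : 'C(M - L.+1, L.+1 - l) <= 'C(M - l, L.+1 - l).
  by apply: leq_bin2l; apply: leq_sub2l.
apply: leq_trans (leq_mul c1 (leqnn _)) _.
rewrite -mulnA (mulnC _ 'C(M, l)).
apply: leq_trans (leq_mul (leqnn _) (leq_mul (leqnn _) c2)) _.
by rewrite binom_id // mulnCA mulnC.
Qed.

Lemma count0 M L (S : {set 'I_M}) :
  #|[set T : {set 'I_M} | (#|T| == L.+1) && (#|S :&: T| == 0)]| <= 'C(M, L.+1).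
Proof.
rewrite -[M in 'C(M, _)]card_ord -card_draws; apply: subset_leq_card.
by apply/subsetP => T; rewrite !inE => /andP [].
Qed.

Open Scope R_scope.
HB.instance Definition _ := Monoid.isMulLaw.Build R 0%R Rmult Rmult_0_l Rmult_0_r.
HB.instance Definition _ := Monoid.isAddLaw.Build R Rmult Rplus Rmult_plus_distr_r Rmult_plus_distr_l.

Definition indR (b : bool) : R := if b then 1 else 0.

Lemma prod_ind (J : finType) (b : J -> bool) :
  \big[Rmult/1]_(j : J) indR (b j) = indR [forall j, b j].
Proof.
case: (boolP [forall j, b j]) => [/forallP H | /forallPn [j0 Hj0]].
  by rewrite big1 // => j _; rewrite H.
by rewrite (bigD1 j0) //= (negbTE Hj0) /indR Rmult_0_l.
Qed.

Lemma prod_pick (I J : finType) (h : J -> I) (hinj : injective h) (F : J -> R) :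
  \big[Rmult/1]_(i : I) (match [pick j | h j == i] with Some j => F j | None => 1 end)
  = \big[Rmult/1]_(j : J) F j.
Proof.
transitivity (\big[Rmult/1]_(i : I) \big[Rmult/1]_(j | h j == i) F j).
  apply: eq_bigr => i _; case: pickP => [j /eqP hj | none].
    rewrite (big_pred1 j) // => j'; rewrite -hj.
    by apply/eqP/eqP => [/hinj | ->].
  by rewrite big_pred0.
by rewrite [RHS](partition_big h xpredT).
Qed.

Section Marg.
Variables (X : finType) (P : X -> R).
Hypothesis hP0 : forall x, 0 <= P x.
Hypothesis hP1 : \big[Rplus/0]_(x : X) P x = 1.

Definition PP (J : finType) (x : {ffun J -> X}) := \big[Rmult/1]_(j : J) P (x j).

Lemma PP_ge0 (J : finType) (x : {ffun J -> X}) : 0 <= PP x.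
Proof.
rewrite /PP; elim/big_ind: _ => //; [lra | move=> a b Ha Hb; exact: Rmult_le_pos].
Qed.

Lemma sumPP (J : finType) : \big[Rplus/0]_(x : {ffun J -> X}) PP x = 1.
Proof.
rewrite /PP -(bigA_distr_bigA (fun (j : J) (y : X) => P y)).
by rewrite big1 // => j _.
Qed.

Lemma marg_key (I J : finType) (h : J -> I) (hinj : injective h) (x : {ffun J -> X}) :
  \big[Rplus/0]_(f : {ffun I -> X}) (PP f * indR ([ffun j => f (h j)] == x)) = PP x.
Proof.
pose c (i : I) (y : X) := P y * (match [pick j | h j == i] with Some j => indR (y == x j) | None => 1 end).
transitivity (\big[Rplus/0]_(f : {ffun I -> X}) \big[Rmult/1]_i c i (f i)).
  apply: eq_bigr => f _; rewrite /c big_split /=; congr (_ * _).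
  transitivity (\big[Rmult/1]_(i : I) (match [pick j | h j == i] with Some j => indR (f (h j) == x j) | None => 1 end)).
    rewrite prod_pick // prod_ind; congr indR.
    apply/eqP/forallP => [<- j | H]; first by rewrite ffunE.
    by apply/ffunP => j; rewrite ffunE; apply/eqP.
  apply: eq_bigr => i _; case: pickP => // j /eqP ->; done.
rewrite -(bigA_distr_bigA c) /PP -(prod_pick hinj).
apply: eq_bigr => i _; rewrite /c; case: pickP => [j _ | none].
  rewrite (bigD1 (x j)) //= eqxx /indR Rmult_1_r big1 ?Rplus_0_r // => y /negbTE ->.
  by rewrite Rmult_0_r.
by under eq_bigr do rewrite Rmult_1_r.
Qed.

Lemma marginal (I J : finType) (h : J -> I) (hinj : injective h) (G : {ffun J -> X} -> R) :
  \big[Rplus/0]_(f : {ffun I -> X}) (PP f * G [ffun j => f (h j)])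
  = \big[Rplus/0]_(x : {ffun J -> X}) (PP x * G x).
Proof.
transitivity (\big[Rplus/0]_(f : {ffun I -> X}) \big[Rplus/0]_(x : {ffun J -> X})
    (PP f * indR ([ffun j => f (h j)] == x) * G x)).
  apply: eq_bigr => f _.
  rewrite (bigD1 [ffun j => f (h j)]) //= eqxx /indR Rmult_1_r big1 ?Rplus_0_r //.
  by move=> y; rewrite eq_sym => /negbTE ->; rewrite Rmult_0_r Rmult_0_l.
rewrite exchange_big; apply: eq_bigr => x _.
by rewrite -big_distrl /= marg_key.
Qed.

Definition join (A B : finType) (a : {ffun A -> X}) (b : {ffun B -> X}) : {ffun A + B -> X} :=
  [ffun i => match i with inl i => a i | inr i => b i end].

Lemma split_sum (A B : finType) (G : {ffun A + B -> X} -> R) :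
  \big[Rplus/0]_(x : {ffun A + B -> X}) (PP x * G x)
  = \big[Rplus/0]_(a : {ffun A -> X}) \big[Rplus/0]_(b : {ffun B -> X}) (PP a * PP b * G (join a b)).
Proof.
rewrite pair_bigA /=.
rewrite (reindex (fun p : {ffun A -> X} * {ffun B -> X} => join p.1 p.2)) /=.
  apply: eq_bigr => [[a b]] _ /=; congr (_ * _).
  rewrite /PP big_sumType; congr (_ * _); apply: eq_bigr => i _; by rewrite ffunE.
exists (fun x => ([ffun a => x (inl a)], [ffun b => x (inr b)])) => [[a b] _ | x _] /=.
  by congr pair; apply/ffunP => i; rewrite !ffunE.
by apply/ffunP => [[i|i]]; rewrite !ffunE.
Qed.

End Marg.

Definition enumS (T : finType) (S : {set T}) n (H : #|S| = n) (i : 'I_n) : T :=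
  enum_val (cast_ord (esym H) i).

Lemma enumS_inj (T : finType) (S : {set T}) n (H : #|S| = n) : injective (enumS H).
Proof. by move=> i j /enum_val_inj /cast_ord_inj. Qed.

Lemma enumS_in (T : finType) (S : {set T}) n (H : #|S| = n) i : enumS H i \in S.
Proof. exact: enum_valP. Qed.

Lemma sigma_enumS (X T : finType) (S : {set T}) n (H : #|S| = n) (f : T -> X) :
  Defs.sigma [ffun j => f (enumS H j)] = f @: S.
Proof.
apply/setP => y; apply/imsetP/imsetP => [[j _ ->] | [t tS ->]].
  by exists (enumS H j); rewrite ?ffunE ?enumS_in.
exists (cast_ord H (enum_rank_in tS t)) => //.
by rewrite ffunE /enumS cast_ordK enum_rankK_in.
Qed.
Arguments enumS_inj {T S n} H.
Arguments enumS_in {T S n} H i.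

Lemma sum_ind (I : finType) (Q : pred I) (F : I -> R) :
  \big[Rplus/0]_(i | Q i) F i = \big[Rplus/0]_i (F i * indR (Q i)).
Proof.
rewrite big_mkcond; apply: eq_bigr => i _; rewrite /indR; case: (Q i) => /=; lra.
Qed.

Lemma sigma_eq (X T : finType) (S : {set T}) n (H : #|S| = n) (f : T -> X) (x : {ffun 'I_n -> X}) :
  (forall j, x j = f (enumS H j)) -> Defs.sigma x = f @: S.
Proof.
move=> Hx; rewrite -(sigma_enumS H f); congr Defs.sigma; apply/ffunP => j; by rewrite ffunE.
Qed.

Lemma memIDf (T0 : finType) (A B : {set T0}) x : x \in A :&: B -> x \in A :\: B -> False.
Proof. by rewrite !inE => /andP[_ ->] /andP[]. Qed.
Lemma memIDf' (T0 : finType) (A B : {set T0}) x : x \in A :&: B -> x \in B :\: A -> False.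
Proof. by rewrite !inE => /andP[-> _] /andP[]. Qed.
Lemma memDDf (T0 : finType) (A B : {set T0}) x : x \in A :\: B -> x \in B :\: A -> False.
Proof. by rewrite !inE => /andP[/negbTE -> _] /andP[]. Qed.

Section Main.
Variables (X Y : finType) (W : X -> Y -> R) (P : X -> R) (M L : nat).
Hypothesis hP0 : forall x, 0 <= P x.
Hypothesis hP1 : \big[Rplus/0]_(x : X) P x = 1.

Local Notation ne A := (~~ is_edge W A).

Lemma E1_term (S : {set 'I_M}) (HS : #|S| = L.+1) :
  \big[Rplus/0]_(f : {ffun 'I_M -> X}) (PP P f * indR (ne (f @: S))) = nonedge_mass W P L.
Proof.
under eq_bigr do rewrite -(sigma_enumS HS).
rewrite (marginal hP1 (enumS_inj HS) (fun x => indR (ne (Defs.sigma x)))).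
rewrite /nonedge_mass [RHS]sum_ind; apply: eq_bigr => x _; rewrite /indR /PP /Pprod /=; case: ifP => _; lra.
Qed.

Definition Gp l m (x : {ffun ('I_l + 'I_m) + 'I_m -> X}) : R :=
  indR (ne (Defs.sigma [ffun j => x (inl (inl j))] :|: Defs.sigma [ffun j => x (inl (inr j))])) *
  indR (ne (Defs.sigma [ffun j => x (inl (inl j))] :|: Defs.sigma [ffun j => x (inr j)])).

Lemma pair_term (S T : {set 'I_M}) (HS : #|S| = L.+1) (HT : #|T| = L.+1) :
  \big[Rplus/0]_(f : {ffun 'I_M -> X}) (PP P f * (indR (ne (f @: S)) * indR (ne (f @: T))))
  = theta_mass W P L #|S :&: T|.
Proof.
have H1 : #|S :&: T| = #|S :&: T| by [].
have H2 : #|S :\: T| = (L.+1 - #|S :&: T|)%nat by rewrite cardsD HS.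
have H3 : #|T :\: S| = (L.+1 - #|S :&: T|)%nat by rewrite cardsD setIC HT.
pose h (i : ('I_#|S :&: T| + 'I_(L.+1 - #|S :&: T|)) + 'I_(L.+1 - #|S :&: T|)) : 'I_M :=
  match i with inl (inl j) => enumS H1 j | inl (inr j) => enumS H2 j | inr j => enumS H3 j end.
have hinj : injective h.
  move=> [[i|i]|i] [[j|j]|j] /= E.
  - by rewrite (enumS_inj _ _ _ E).
  - by case: (memIDf (enumS_in H1 i)); rewrite E enumS_in.
  - by case: (memIDf' (enumS_in H1 i)); rewrite E enumS_in.
  - by case: (memIDf (enumS_in H1 j)); rewrite -E enumS_in.
  - by rewrite (enumS_inj _ _ _ E).
  - by case: (memDDf (enumS_in H2 i)); rewrite E enumS_in.
  - by case: (memIDf' (enumS_in H1 j)); rewrite -E enumS_in.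
  - by case: (memDDf (enumS_in H2 j)); rewrite -E enumS_in.
  - by rewrite (enumS_inj _ _ _ E).
transitivity (\big[Rplus/0]_(f : {ffun 'I_M -> X}) (PP P f * Gp [ffun i => f (h i)])).
  apply: eq_bigr => f _; rewrite /Gp.
  rewrite (@sigma_eq _ _ _ _ H1 f); last by move=> j; rewrite !ffunE.
  rewrite (@sigma_eq _ _ _ _ H2 f); last by move=> j; rewrite !ffunE.
  rewrite (@sigma_eq _ _ _ _ H3 f); last by move=> j; rewrite !ffunE.
  by rewrite -!imsetU setID [S :&: T]setIC setID.
rewrite (marginal hP1 hinj) split_sum.
transitivity (\big[Rplus/0]_(ab : {ffun 'I_#|S :&: T| + 'I_(L.+1 - #|S :&: T|) -> X})
   (PP P ab * \big[Rplus/0]_(c : {ffun 'I_(L.+1 - #|S :&: T|) -> X}) (PP P c * Gp (join ab c)))).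
  by apply: eq_bigr => ab _; rewrite big_distrr; apply: eq_bigr => c _; rewrite Rmult_assoc.
rewrite split_sum /theta_mass; apply: eq_bigr => a _.
rewrite [in RHS]sum_ind.
have -> : forall r, r ^ 2 = r * r by move=> r; ring.
rewrite big_distrlr big_distrr; apply: eq_bigr => b _.
rewrite big_distrr big_distrr; apply: eq_bigr => c _.
rewrite /Gp.
have -> : [ffun j => join (join a b) c (inl (inl j))] = a by apply/ffunP => j; rewrite !ffunE.
have -> : [ffun j => join (join a b) c (inl (inr j))] = b by apply/ffunP => j; rewrite !ffunE.
have -> : [ffun j => join (join a b) c (inr j)] = c by apply/ffunP => j; rewrite !ffunE.
rewrite /PP /Pprod; rewrite /=. ring.
Qed.

Lemma theta0 : theta_mass W P L 0 = nonedge_mass W P L ^ 2.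
Proof.
have a0 : {ffun 'I_0 -> X} by apply: finfun; case=> m; rewrite ltn0.
rewrite /theta_mass (big_pred1 a0) => [|a]; last first.
  by apply/esym/eqP/ffunP => [[m hm]]; exfalso; rewrite ltn0 in hm.
have -> : Defs.sigma a0 = set0.
  by apply/setP => y; rewrite inE; apply/imsetP => [[[m hm]]]; exfalso; rewrite ltn0 in hm.
rewrite /Pprod big_ord0 Rmult_1_l.
by under eq_bigl do rewrite set0U.
Qed.

End Main.

Lemma sum_le (I : Type) (r : seq I) (Q : pred I) (F G : I -> R) :
  (forall i, Q i -> F i <= G i) ->
  \big[Rplus/0]_(i <- r | Q i) F i <= \big[Rplus/0]_(i <- r | Q i) G i.
Proof.
move=> H; elim/big_ind2: _ => //; [lra | move=> *; lra].
Qed.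

Lemma sum_ge0 (I : Type) (r : seq I) (Q : pred I) (F : I -> R) :
  (forall i, Q i -> 0 <= F i) -> 0 <= \big[Rplus/0]_(i <- r | Q i) F i.
Proof.
move=> H; elim/big_ind: _ => //; [lra | move=> *; lra].
Qed.

Lemma sum_const_R (I : finType) (Q : pred I) (c : R) :
  \big[Rplus/0]_(i | Q i) c = INR #|Q| * c.
Proof.
rewrite big_const; elim: #|Q| => [|n IH]; first by rewrite /=; lra.
rewrite iterS IH S_INR; lra.
Qed.

Lemma indR2 b : indR b * indR b = indR b.
Proof. by case: b; rewrite /indR; lra. Qed.

Lemma indR_ge0 b : 0 <= indR b.
Proof. by case: b; rewrite /indR; lra. Qed.

Section Main2.
Variables (X Y : finType) (W : X -> Y -> R) (P : X -> R) (M L : nat).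
Hypothesis hP0 : forall x, 0 <= P x.
Hypothesis hP1 : \big[Rplus/0]_(x : X) P x = 1.
Hypothesis hL : (1 <= L)%nat.
Hypothesis hM : (L.+1 <= M)%nat.

Local Notation ne A := (~~ is_edge W A).
Local Notation q := (nonedge_mass W P L).
Local Notation C := (INR 'C(M, L.+1)).
Local Notation th l := (theta_mass W P L l).

Definition Nf (f : {ffun 'I_M -> X}) : R :=
  \big[Rplus/0]_(S : {set 'I_M} | #|S| == L.+1) indR (ne (f @: S)).

Lemma card_ksets : #|[pred S : {set 'I_M} | #|S| == L.+1]| = 'C(M, L.+1).
Proof.
rewrite -[M in 'C(M, _)]card_ord -card_draws; apply: eq_card => S; by rewrite !inE.
Qed.

Lemma E1_eq : \big[Rplus/0]_(f : {ffun 'I_M -> X}) (PP P f * Nf f) = C * q.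
Proof.
under eq_bigr do rewrite /Nf big_distrr.
rewrite exchange_big /=.
transitivity (\big[Rplus/0]_(S : {set 'I_M} | #|S| == L.+1) q).
  apply: eq_bigr => S /eqP HS; exact: E1_term.
by rewrite sum_const_R card_ksets.
Qed.

Lemma th_ge0 l : 0 <= th l.
Proof.
apply: sum_ge0 => a _; apply: Rmult_le_pos; first exact: PP_ge0.
exact: pow2_ge_0.
Qed.

Lemma q_ge0 : 0 <= q.
Proof. apply: sum_ge0 => x _; exact: PP_ge0. Qed.

Lemma inter_lt (S T : {set 'I_M}) : #|S| = L.+1 -> #|T| = L.+1 -> T != S ->
  (#|S :&: T| < L.+1)%nat.
Proof.
move=> HS HT nTS; rewrite ltn_neqAle -{2}HS subset_leq_card ?subsetIl // andbT.
apply/negP => /eqP e.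
have e1 : S :&: T = S by apply/eqP; rewrite eqEcard subsetIl e HS leqnn.
have sST : S \subset T by rewrite -e1 subsetIr.
have : S == T by rewrite eqEcard sST HS HT leqnn.
by rewrite eq_sym (negbTE nTS).
Qed.

Definition cntN (S : {set 'I_M}) k := #|[set T : {set 'I_M} | (#|T| == L.+1) && (#|S :&: T| == k)]|.

Lemma term_bound (S : {set 'I_M}) (HS : #|S| = L.+1) l : (1 <= l)%nat -> (l < L.+1)%nat ->
  INR (cntN S l) * th l <= C * (INR 'C(L.+1, l) ^ 2 * / INR 'C(M, l) * th l).
Proof.
move=> l1 lL.
have hc := count_bound HS (ltnW lL) hM.
have hb : 0 < INR 'C(M, l).
  apply: lt_0_INR; apply/ltP; rewrite bin_gt0; apply: leq_trans hM; exact: ltnW.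
have hn : INR (cntN S l) * INR 'C(M, l) <= INR 'C(L.+1, l) ^ 2 * C.
  have h0 : INR (cntN S l * 'C(M, l))%nat <= INR ('C(L.+1, l) * 'C(L.+1, l) * 'C(M, L.+1))%nat.
    by apply: le_INR; apply/leP.
  rewrite !mult_INR in h0; lra.
have ha : INR (cntN S l) <= INR 'C(L.+1, l) ^ 2 * C * / INR 'C(M, l).
  apply: (Rmult_le_reg_r (INR 'C(M, l))) => //.
  rewrite Rmult_assoc Rinv_l; last lra.
  lra.
have ht := th_ge0 l.
replace (C * (INR 'C(L.+1, l) ^ 2 * / INR 'C(M, l) * th l)) with
  ((INR 'C(L.+1, l) ^ 2 * C * / INR 'C(M, l)) * th l) by ring.
by apply: Rmult_le_compat_r.
Qed.


Definition SigmaT := \big[Rplus/0]_(1 <= l < L.+1) (INR 'C(L.+1, l) ^ 2 * / INR 'C(M, l) * th l).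

Lemma perS (S : {set 'I_M}) (HS : #|S| = L.+1) :
  \big[Rplus/0]_(T : {set 'I_M} | #|T| == L.+1)
     \big[Rplus/0]_(f : {ffun 'I_M -> X}) (PP P f * (indR (ne (f @: S)) * indR (ne (f @: T))))
  <= q + C * q ^ 2 + C * SigmaT.
Proof.
rewrite (bigD1 S) /=; last by rewrite HS.
have -> : \big[Rplus/0]_(f : {ffun 'I_M -> X}) (PP P f * (indR (ne (f @: S)) * indR (ne (f @: S)))) = q.
  under eq_bigr do rewrite indR2; exact: E1_term.
suff : \big[Rplus/0]_(T : {set 'I_M} | (#|T| == L.+1) && (T != S))
     \big[Rplus/0]_(f : {ffun 'I_M -> X}) (PP P f * (indR (ne (f @: S)) * indR (ne (f @: T))))
   <= C * q ^ 2 + C * SigmaT.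
  move=> H; apply: Rle_trans (Rplus_le_compat_l q _ _ H) _; rewrite /=; lra.
rewrite (eq_bigr (fun T => th #|S :&: T|)); last first.
  by move=> T /andP [/eqP HT _]; apply: pair_term.
rewrite (partition_big (fun T => (inord #|S :&: T| : 'I_L.+1)) xpredT) //=.
apply: (Rle_trans _ (\big[Rplus/0]_(l < L.+1) (INR (cntN S l) * th l))).
  apply: sum_le.
  move=> l _.
  rewrite (eq_bigr (fun _ => th l)); last first.
    move=> T /andP [/andP [/eqP HT nTS] /eqP <-].
    by rewrite inordK // inter_lt.
  rewrite sum_const_R; apply: Rmult_le_compat_r; first exact: th_ge0.
  apply: le_INR; apply/leP; apply: subset_leq_card; apply/subsetP => T.
  rewrite !inE => /andP [/andP [HT nTS] /eqP <-]; rewrite HT /=.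
  by rewrite inordK // inter_lt //; apply/eqP.
rewrite -(big_mkord xpredT (fun l => INR (cntN S l) * th l)) big_ltn //.
apply: Rplus_le_compat.
  rewrite theta0 //.
  apply: Rmult_le_compat_r; first exact: pow2_ge_0.
  apply: le_INR; apply/leP; exact: count0.
rewrite /SigmaT big_distrr /= big_nat_cond [X in _ <= X]big_nat_cond.
apply: sum_le => l /andP [/andP [l1 lL] _].
exact: term_bound.
Qed.

End Main2.

Lemma ln2_pos : 0 < ln 2.
Proof. have := ln_lt_2; have : 0 < / 2 by apply: Rinv_0_lt_compat; lra. lra. Qed.

Lemma pow2_neglog (q : R) : 0 < q -> pow2 (- log2 q) = / q.
Proof.
move=> hq; rewrite /pow2 /Rpower /log2.
have h2 := ln2_pos.
replace (- (ln q / ln 2) * ln 2) with (- ln q) by (field; lra).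
by rewrite exp_Ropp exp_ln.
Qed.

Lemma pow2_th (q T : R) : 0 < q -> 0 <= T ->
  T / q ^ 2 <= pow2 (-2 * log2 q + log2 T).
Proof.
move=> hq hT; rewrite /pow2 /Rpower /log2.
have h2 := ln2_pos.
case: (Rle_lt_or_eq_dec 0 T hT) => [hT' | <-].
  replace ((-2 * (ln q / ln 2) + ln T / ln 2) * ln 2) with (- ln q + (- ln q) + ln T) by (field; lra).
  rewrite !exp_plus exp_Ropp exp_ln // exp_ln //.
  right; field; lra.
rewrite /Rdiv Rmult_0_l; left; exact: exp_pos.
Qed.

Section Main3.
Variables (X Y : finType) (W : X -> Y -> R) (P : X -> R) (M L : nat).
Hypothesis hP0 : forall x, 0 <= P x.
Hypothesis hP1 : \big[Rplus/0]_(x : X) P x = 1.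
Hypothesis hL : (1 <= L)%nat.
Hypothesis hM : (L.+1 <= M)%nat.
Hypothesis hpos : 0 < nonedge_mass W P L.

Local Notation ne A := (~~ is_edge W A).
Local Notation q := (nonedge_mass W P L).
Local Notation C := (INR 'C(M, L.+1)).
Local Notation th l := (theta_mass W P L l).

Lemma B_lower : / C * / q + 1 + SigmaT W P M L * / q ^ 2 <= B_bound W P M L.
Proof.
have hLp : INR L <> 0 by apply: not_0_INR; move=> e; move: hL; rewrite e.
rewrite /B_bound.
have -> : INR L * I_L1 W P L = - log2 q by rewrite /I_L1; field.
rewrite pow2_neglog //.
apply: Rplus_le_compat_l.
rewrite /SigmaT big_distrl /=; apply: sum_le => l _.
have -> : INR L * theta_L1 W P L l = -2 * log2 q + log2 (th l) by rewrite /theta_L1 /I_L1; field.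
have hc : 0 <= INR 'C(L.+1, l) ^ 2 * / INR 'C(M, l).
  apply: Rmult_le_pos; first exact: pow2_ge_0.
  case: (posnP 'C(M, l)) => [-> | h]; first by rewrite /= Rinv_0; lra.
  by apply/Rlt_le/Rinv_0_lt_compat/lt_0_INR/ltP.
rewrite Rmult_assoc; apply: Rmult_le_compat_l => //.
by apply: pow2_th => //; apply: th_ge0.
Qed.


Lemma E2_bound : \big[Rplus/0]_(f : {ffun 'I_M -> X}) (PP P f * (Nf W L f * Nf W L f))
  <= C * (q + C * q ^ 2 + C * SigmaT W P M L).
Proof.
transitivity (\big[Rplus/0]_(S : {set 'I_M} | #|S| == L.+1) \big[Rplus/0]_(T : {set 'I_M} | #|T| == L.+1)
     \big[Rplus/0]_(f : {ffun 'I_M -> X}) (PP P f * (indR (ne (f @: S)) * indR (ne (f @: T))))).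
  right.
  transitivity (\big[Rplus/0]_(f : {ffun 'I_M -> X}) \big[Rplus/0]_(S : {set 'I_M} | #|S| == L.+1)
     \big[Rplus/0]_(T : {set 'I_M} | #|T| == L.+1) (PP P f * (indR (ne (f @: S)) * indR (ne (f @: T))))).
    apply: eq_bigr => f _; rewrite /Nf big_distrlr big_distrr; apply: eq_bigr => S _.
    by rewrite big_distrr.
  rewrite exchange_big; apply: eq_bigr => S _; by rewrite exchange_big.
apply: (Rle_trans _ (\big[Rplus/0]_(S : {set 'I_M} | #|S| == L.+1) (q + C * q ^ 2 + C * SigmaT W P M L))).
  apply: sum_le => S /eqP HS; exact: perS.
by rewrite sum_const_R card_ksets; right.
Qed.

End Main3.

Close Scope R_scope.

Lemma SigmaT_ge0 (X Y : finType) (W : X -> Y -> R) (P : X -> R) (M L : nat) :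
  (forall x, (0 <= P x)%R) -> (0 <= SigmaT W P M L)%R.
Proof.
move=> hP0; apply: sum_ge0 => l _.
apply: Rmult_le_pos; last exact: th_ge0.
apply: Rmult_le_pos; first exact: pow2_ge_0.
case: (posnP 'C(M, l)) => [-> | h]; first by rewrite /= Rinv_0; lra.
by apply/Rlt_le/Rinv_0_lt_compat/lt_0_INR/ltP.
Qed.

Lemma code_N0 (X Y : finType) (W : X -> Y -> R) (M L : nat) (f : {ffun 'I_M -> X}) :
  is_list_code W L f -> Nf W L f = 0%R.
Proof.
move/forallP => H; rewrite /Nf big1 // => S HS.
by have := H S; rewrite HS /= => ->.
Qed.

Unset Implicit Arguments.
Theorem mainTheorem11 (X Y : finType) (W : X -> Y -> R) (P : X -> R) (M L : nat)
  (hW : is_channel W) (hP : is_pmf P)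
  (hL : (1 <= L)%N) (hM : (L.+1 <= M)%N)
  (hpos : (0 < nonedge_mass W P L)%R) :
  (prob_list_code W P M L <= 1 - / B_bound W P M L)%R.
Proof.
case: hP => hP0 hP1.
set q := nonedge_mass W P L.
set C := INR 'C(M, L.+1).
set B := B_bound W P M L.
set Sg := SigmaT W P M L.
set pc := prob_list_code W P M L.
set pn := \big[Rplus/0%R]_(f : {ffun 'I_M -> X}) (PP P f * indR (~~ is_list_code W L f))%R.
set E1 := \big[Rplus/0%R]_(f : {ffun 'I_M -> X}) (PP P f * Nf W L f)%R.
set E2 := \big[Rplus/0%R]_(f : {ffun 'I_M -> X}) (PP P f * (Nf W L f * Nf W L f))%R.
have hC : (0 < C)%R by apply/lt_0_INR/ltP; rewrite bin_gt0.
have hE1 : E1 = (C * q)%R by apply: E1_eq.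
have hE2 : (E2 <= C * (q + C * q ^ 2 + C * Sg))%R by apply: E2_bound.
have hK : (/ C * / q + 1 + Sg * / q ^ 2 <= B)%R by apply: B_lower.
have hSg : (0 <= Sg)%R by apply: SigmaT_ge0.
have epc : (pc + pn = 1)%R.
  transitivity (\big[Rplus/0%R]_(f : {ffun 'I_M -> X}) PP P f); last exact: sumPP.
  rewrite /pc /prob_list_code sum_ind /pn -big_split /=.
  apply: eq_bigr => f _; rewrite /PP /indR; case: (is_list_code W L f) => /=; lra.
have hD : forall t, (2 * t * E1 - t ^ 2 * pn <= E2)%R.
  move=> t.
  have -> : (2 * t * E1 - t ^ 2 * pn)%R =
    \big[Rplus/0%R]_(f : {ffun 'I_M -> X}) (PP P f * (2 * t * Nf W L f - t ^ 2 * indR (~~ is_list_code W L f)))%R.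
    transitivity (\big[Rplus/0%R]_(f : {ffun 'I_M -> X})
       ((2 * t) * (PP P f * Nf W L f) + (- t ^ 2) * (PP P f * indR (~~ is_list_code W L f))))%R.
      rewrite big_split /= -!big_distrr /= -/E1 -/pn; ring.
    apply: eq_bigr => f _; ring.
  apply: sum_le => f _; apply: Rmult_le_compat_l; first exact: PP_ge0.
  case: (boolP (is_list_code W L f)) => hc.
    rewrite (code_N0 hc) /indR /=; lra.
  have hh := Rle_0_sqr (Nf W L f - t); rewrite /Rsqr in hh; rewrite /indR /=; nra.
have hqs : (0 < q ^ 2)%R by apply: pow_lt.
have hBpos : (0 < B)%R.
  have : (0 < / C * / q)%R by apply: Rmult_lt_0_compat; apply: Rinv_0_lt_compat.
  have : (0 <= Sg * / q ^ 2)%R by apply: Rmult_le_pos => //; apply/Rlt_le/Rinv_0_lt_compat.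
  lra.
have hE2B : (E2 <= B * E1 ^ 2)%R.
  apply: Rle_trans hE2 _.
  have -> : (C * (q + C * q ^ 2 + C * Sg) = (/ C * / q + 1 + Sg * / q ^ 2) * E1 ^ 2)%R.
    have hq0 : q <> 0%R by apply: Rgt_not_eq. have hC0 : C <> 0%R by apply: Rgt_not_eq. by rewrite hE1; field; auto.
  apply: Rmult_le_compat_r => //; exact: pow2_ge_0.
have hE1p : (0 < E1)%R by rewrite hE1; apply: Rmult_lt_0_compat.
have hy : (0 < B * E1 ^ 2)%R by apply: Rmult_lt_0_compat => //; apply: pow_lt.
have h1 := hD (B * E1)%R.
have h2 : ((B * E1 ^ 2) * (1 - B * pn) <= 0)%R.
  have -> : ((B * E1 ^ 2) * (1 - B * pn) = 2 * (B * E1) * E1 - (B * E1) ^ 2 * pn - B * E1 ^ 2)%R by ring.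
  lra.
have h3 : (1 <= B * pn)%R.
  apply: Rnot_lt_le => h; have : (0 < (B * E1 ^ 2) * (1 - B * pn))%R.
    apply: Rmult_lt_0_compat => //; lra.
  lra.
have h4 : (/ B <= pn)%R.
  apply: (Rmult_le_reg_l B) => //; rewrite Rinv_r; lra.
lra.
Qed.
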